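(* Let $\mathcal{M}=(S,A,\mathcal{U},R,s_\iota,\gamma)$ be an $(s,a)$-rectangular RMDP, $s\in S$ and $a\in A$. If there exists $\vec x\in\mathbb{R}^S$ such that \[R(s,a)+\gamma\inf_{\vec u\in\mathcal{U}_{(s,a)}}\sum_{s'\in S}P_{\vec u}(s,a)(s')\vec x(s')<\mathfrak{B}(\vec x)(s)-\frac{\gamma}{1-\gamma}\,\mathsf{span}(\mathfrak{B}(\vec x)-\vec x),\] then action $a$ is suboptimal for state $s$.
   Context: An RMDP $(S,A,\mathcal{U},R,s_\iota,\gamma)$ has finite states $S$, finite actions $A$, rewards $R\colon S\times A\to\mathbb{R}$, initial state $s_\iota$, discount $\gamma\in(0,1)$, and $(s,a)$-rectangular uncertainty set $\mathcal{U}=\prod_{(s,a)}\mathcal{U}_{(s,a)}$, where each $\vec u\in\mathcal{U}_{(s,a)}$ is a probability vector over successor states giving $P_{\vec u}(s,a)(s')=\vec u(s')$. The robust Bellman operator is $\mathfrak{B}(\vec x)(s)=\max_{a\in A}R(s,a)+\gamma\inf_{\vec u\in\mathcal{U}_{(s,a)}}\sum_{s'}P_{\vec u}(s,a)(s')\vec x(s')$ for $\vec x\in\mathbb{R}^S$; $\mathsf{span}(\vec y)=\max_s\vec y(s)-\min_s\vec y(s)$. Let $\vec v$ be the optimal robust value function $\vec v(s)=\sup_\pi\inf_{\vec u\in\mathcal{U}}\mathbb{E}_{\pi,P_{\vec u}}[\sum_t\gamma^tR(s_t,a_t)\mid s_0=s]$, which is the fixed point of $\mathfrak{B}$. Action $a$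 is suboptimal for state $s$ if $R(s,a)+\gamma\inf_{\vec u\in\mathcal{U}_{(s,a)}}\sum_{s'}P_{\vec u}(s,a)(s')\vec v(s')<\vec v(s)$. *)

(* Defs.v *)
From HB Require Import structures.
From mathcomp Require Import all_boot all_order all_algebra.
From mathcomp Require Import boolp classical_sets reals.
Set Implicit Arguments. Unset Strict Implicit. Unset Printing Implicit Defensive.
Import Order.TTheory GRing.Theory Num.Theory.
Local Open Scope classical_set_scope.
Local Open Scope ring_scope.

Section RMDP.
Variables (R : realType) (S A : finType).

Definition prob_vec (u : S -> R) : Prop :=
  (forall s', 0 <= u s') /\ \sum_(s' : S) u s' = 1.

(* An (s,a)-rectangular uncertainty set: U s a = U_(s,a), a nonempty set of
   probability vectors; the full set U is the product of the U s a. *)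
Definition rect_uncertainty (U : S -> A -> set (S -> R)) : Prop :=
  forall s a, U s a !=set0 /\ (forall u, U s a u -> prob_vec u).

Definition worst_exp (U : S -> A -> set (S -> R)) (s : S) (a : A)
    (x : S -> R) : R :=
  inf [set \sum_(s' : S) u s' * x s' | u in U s a].

Definition qval (Rw : S -> A -> R) (U : S -> A -> set (S -> R)) (gamma : R)
    (x : S -> R) (s : S) (a : A) : R :=
  Rw s a + gamma * worst_exp U s a x.

(* robust Bellman operator; max over the finite set A, written as sup *)
Definition bellman (Rw : S -> A -> R) (U : S -> A -> set (S -> R)) (gamma : R)
    (x : S -> R) (s : S) : R :=
  sup [set qval Rw U gamma x s a | a in [set: A]].

Definition rspan (y : S -> R) : R := sup (range y) - inf (range y).

(* a is suboptimal for s w.r.t. the optimal robust value v *)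
Definition suboptimal (Rw : S -> A -> R) (U : S -> A -> set (S -> R))
    (gamma : R) (v : S -> R) (s : S) (a : A) : Prop :=
  qval Rw U gamma v s a < v s.

End RMDP.

(* Main.v *)
Require Import Defs.
From HB Require Import structures.
From mathcomp Require Import all_boot all_order all_algebra.
From mathcomp Require Import boolp classical_sets reals.
From mathcomp Require Import ring lra.
Import Order.TTheory GRing.Theory Num.Theory.
Local Open Scope classical_set_scope.
Local Open Scope ring_scope.

Set Implicit Arguments.
Section Aux.
Variable R : realType.

Lemma fin_max (T : finType) (t0 : T) (f : T -> R) :
  exists t, forall t', f t' <= f t.
Proof.
case: (@arg_maxP _ R T t0 xpredT f isT) => t _ H.
by exists t => t'; apply: H.
Qed.

Lemma sup_range_ub (T : finType) (t0 : T) (f : T -> R) t :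
  f t <= sup (range f).
Proof.
have [tm Hm] := @fin_max _ t0 f.
apply: ub_le_sup; last by exists t.
by exists (f tm) => y [t' _ <-].
Qed.

Lemma sup_range_att (T : finType) (t0 : T) (f : T -> R) :
  exists t, sup (range f) = f t.
Proof.
have [tm Hm] := @fin_max _ t0 f.
exists tm; apply/le_anti/andP; split.
  by apply: ge_sup; [exists (f tm), tm | move=> y [t' _ <-]].
exact: (@sup_range_ub _ t0 f tm).
Qed.

Lemma inf_range_lb (T : finType) (t0 : T) (f : T -> R) t :
  inf (range f) <= f t.
Proof.
have [tm Hm] := @fin_max _ t0 (fun t => - f t).
apply: ge_inf; last by exists t.
exists (f tm) => y [t' _ <-].
by have := Hm t'; rewrite lerN2.
Qed.

Variables (S A : finType) (U : S -> A -> set (S -> R)).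
Hypothesis hU : rect_uncertainty U.

Lemma sum_lb (u : S -> R) (y : S -> R) tm :
  prob_vec u -> (forall t, y tm <= y t) -> y tm <= \sum_s' u s' * y s'.
Proof.
move=> [u0 u1] H.
have -> : y tm = \sum_s' u s' * y tm by rewrite -mulr_suml u1 mul1r.
by apply: ler_sum => i _; apply: ler_wpM2l.
Qed.

Lemma W_lb s a y u : U s a u -> worst_exp U s a y <= \sum_s' u s' * y s'.
Proof.
move=> Hu.
have [tm Hm] := @fin_max _ s (fun t => - y t).
apply: ge_inf; last by exists u.
exists (y tm) => z [u' Hu' <-].
apply: sum_lb; first exact: (proj2 (hU s a)).
by move=> t; have := Hm t; rewrite lerN2.
Qed.

Lemma W_glb s a y r : (forall u, U s a u -> r <= \sum_s' u s' * y s') ->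
  r <= worst_exp U s a y.
Proof.
move=> H; apply: lb_le_inf.
  by have [[u Hu] _] := hU s a; exists (\sum_s' u s' * y s'), u.
by move=> z [u Hu <-]; apply: H.
Qed.

Lemma W_mono s a y z : (forall t, y t <= z t) ->
  worst_exp U s a y <= worst_exp U s a z.
Proof.
move=> H; apply: W_glb => u Hu.
apply: (le_trans (W_lb y Hu)).
have [u0 _] := proj2 (hU s a) u Hu.
by apply: ler_sum => i _; apply: ler_wpM2l.
Qed.

Lemma sum_shift (u y : S -> R) (c : R) : prob_vec u ->
  \sum_s' u s' * (y s' + c) = \sum_s' u s' * y s' + c.
Proof.
move=> [_ u1].
rewrite -[in RHS](mul1r c) -u1 mulr_suml -big_split /=.
by apply: eq_bigr => i _; rewrite mulrDr.
Qed.

Lemma W_shift s a y c :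
  worst_exp U s a (fun t => y t + c) = worst_exp U s a y + c.
Proof.
apply/le_anti/andP; split.
  rewrite -lerBlDr; apply: W_glb => u Hu.
  rewrite lerBlDr -sum_shift; first exact: W_lb.
  exact: (proj2 (hU s a)).
apply: W_glb => u Hu.
rewrite sum_shift; last exact: (proj2 (hU s a)).
by rewrite lerD2r; apply: W_lb.
Qed.

Variables (Rw : S -> A -> R) (gamma : R).
Hypothesis hg0 : 0 < gamma.

Lemma Q_mono y z t b : (forall t, y t <= z t) ->
  qval Rw U gamma y t b <= qval Rw U gamma z t b.
Proof.
by move=> H; rewrite /qval lerD2l; apply: ler_wpM2l; [exact: ltW | exact: W_mono].
Qed.

Lemma Q_shift y c t b :
  qval Rw U gamma (fun t => y t + c) t b = qval Rw U gamma y t b + gamma * c.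
Proof. by rewrite /qval W_shift mulrDr addrA. Qed.

Variable a0 : A.

Lemma T_ub y t b : qval Rw U gamma y t b <= bellman Rw U gamma y t.
Proof. exact: (@sup_range_ub _ a0 (fun b => qval Rw U gamma y t b) b). Qed.

Lemma T_att y t : exists b, bellman Rw U gamma y t = qval Rw U gamma y t b.
Proof. have [b Hb] := @sup_range_att _ a0 (fun b => qval Rw U gamma y t b). by exists b. Qed.

End Aux.
Unset Implicit Arguments.

Theorem theorem27 (R : realType) (S A : finType)
    (U : S -> A -> set (S -> R)) (Rw : S -> A -> R) (s_iota : S) (gamma : R)
    (hU : rect_uncertainty U) (hg0 : 0 < gamma) (hg1 : gamma < 1)
    (v : S -> R) (hv : forall t, bellman Rw U gamma v t = v t)
    (s : S) (a : A) :
  (exists x : S -> R,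
     qval Rw U gamma x s a <
       bellman Rw U gamma x s
       - gamma / (1 - gamma) * rspan (fun t => bellman Rw U gamma x t - x t)) ->
  suboptimal Rw U gamma v s a.
Proof.
move=> [x Hx]; rewrite /suboptimal.
set d := fun t => bellman Rw U gamma x t - x t.
set m := inf (range d).
set M := sup (range d).
have hm : forall t, m <= d t by move=> t; exact: (@inf_range_lb R S s d t).
have hM : forall t, d t <= M by move=> t; exact: (@sup_range_ub R S s d t).
have h1g : 0 < 1 - gamma by lra.
set c := m / (1 - gamma).
set C := M / (1 - gamma).
have hc : c - gamma * c = m by rewrite /c; field; lra.
have hC : C - gamma * C = M by rewrite /C; field; lra.
have low : forall t, x t + c <= v t.
  have [tm Hm] := @fin_max R S s (fun t => x t + c - v t).
  set del := x tm + c - v tm in Hm.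
  have Hle : forall t, x t + (c - del) <= v t.
    by move=> t; have := Hm t; lra.
  have [b Hb] := @T_att R S A U Rw gamma a x tm.
  have H1 := Q_mono hU Rw gamma hg0 _ _ tm b Hle.
  rewrite (Q_shift hU)  -Hb in H1.
  have H2 := @T_ub R S A U Rw gamma a v tm b.
  rewrite hv in H2.
  have H3 := hm tm; rewrite /d in H3.
  have Hd : del * (1 - gamma) <= 0.
    have Edel : del = x tm + c - v tm by []. nra.
  have : del <= 0 by nra.
  move=> Hdl t; have := Hm t; lra.
have up : forall t, v t <= x t + C.
  have [tm Hm] := @fin_max R S s (fun t => v t - x t - C).
  set del := v tm - x tm - C in Hm.
  have Hle : forall t, v t <= x t + (C + del).
    by move=> t; have := Hm t; lra.
  have [b Hb] := @T_att R S A U Rw gamma a v tm.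
  have H1 := Q_mono hU Rw gamma hg0 _ _ tm b Hle.
  rewrite (Q_shift hU)  -Hb hv in H1.
  have H2 := @T_ub R S A U Rw gamma a x tm b.
  have H3 := hM tm; rewrite /d in H3.
  have Hd : del * (1 - gamma) <= 0.
    have Edel : del = v tm - x tm - C by []. nra.
  have : del <= 0 by nra.
  move=> Hdl t; have := Hm t; lra.
have HA := Q_mono hU Rw gamma hg0 _ _ s a (up).
rewrite (Q_shift hU) in HA.
have [b Hb] := @T_att R S A U Rw gamma a x s.
have HB := Q_mono hU Rw gamma hg0 _ _ s b (low).
rewrite (Q_shift hU)  -Hb in HB.
have HC := @T_ub R S A U Rw gamma a v s b.
rewrite hv in HC.
have HE : gamma * C - gamma * c = gamma / (1 - gamma) * (M - m).
  by rewrite /C /c; field; lra.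
have Hsp : rspan (fun t => bellman Rw U gamma x t - x t) = M - m by [].
rewrite Hsp in Hx.
lra.
Qed.
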